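(* Let $h:\{0,1\}^*\to\{0,1\}^*$ be the morphism defined by $h(0)=0110100110110010110$ and $h(1)=1001011001001101001$. Then the fixed point $h^\omega(0)$ avoids $\frac{7}{3}^+$-powers; that is, for every $\varepsilon>0$, $h^\omega(0)$ contains no subword that is a $\beta$-power with $\beta\ge\frac{7}{3}+\varepsilon$.
   Context: $h^\omega(0)$ is the infinite word $\lim_{n\to\infty}h^n(0)$ (well defined since $h(0)$ begins with $0$). For a rational $\beta\ge 1$, a $\beta$-power is a word of the form $x^nx'$ with $x$ a nonempty word, $x'$ a prefix of $x$, $n$ a nonnegative integer and $n+|x'|/|x|=\beta$. A word avoids $\alpha^+$-powers if it is $(\alpha+\varepsilon)$-power-free for all $\varepsilon>0$, where $\gamma$-power-free means no subword is a $\beta$-power for any rational $\beta\ge\gamma$. *)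

(* Defs.v *)
From mathcomp Require Import all_boot all_order all_algebra.
Set Implicit Arguments. Unset Strict Implicit. Unset Printing Implicit Defensive.
Import Order.TTheory GRing.Theory Num.Theory.

(* Binary alphabet {0,1} encoded as bool: 0 = false, 1 = true. *)
Definition bits (s : seq nat) : seq bool := map (fun k => k == 1%N) s.

Definition h_letter (a : bool) : seq bool :=
  if a then bits [:: 1;0;0;1;0;1;1;0;0;1;0;0;1;1;0;1;0;0;1]%N
  else      bits [:: 0;1;1;0;1;0;0;1;1;0;1;1;0;0;1;0;1;1;0]%N.

Definition h (w : seq bool) : seq bool := flatten (map h_letter w).

Definition hpow (n : nat) : seq bool := iter n h [:: false].

(* x is the infinite word h^omega(0) = lim h^n(0): every h^n(0) is a prefix of x. *)
Definition is_h_omega0 (x : nat -> bool) : Prop :=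
  forall n i, (i < size (hpow n))%N -> x i = nth false (hpow n) i.

Definition factor (x : nat -> bool) (i L : nat) : seq bool :=
  mkseq (fun k => x (i + k)%N) L.

Definition is_power (u : seq bool) (beta : rat) : Prop :=
  exists (y y' : seq bool) (n : nat),
    [/\ y != [::], prefix y' y,
        u = flatten (nseq n y) ++ y' &
        beta = (n%:R + (size y')%:R / (size y)%:R)%R].

Definition power_free (x : nat -> bool) (gamma : rat) : Prop :=
  forall (i L : nat) (beta : rat), (gamma <= beta)%R -> ~ is_power (factor x i L) beta.

Definition avoids_plus (x : nat -> bool) (alpha : rat) : Prop :=
  forall eps : rat, (0 < eps)%R -> power_free x (alpha + eps)%R.

(* Main.v *)
Require Import Defs.
From mathcomp Require Import all_boot all_order all_algebra.
From mathcomp Require Import zify ring lra.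
Import Order.TTheory GRing.Theory Num.Theory.

Definition tt0 : seq bool := h_letter false.
Definition tb (r : nat) : bool := nth false tt0 r.

Lemma h_letterE a : h_letter a = map (addb a) tt0.
Proof. by case: a. Qed.

Lemma size_h w : size (h w) = 19 * size w.
Proof.
elim: w => [|a w IH] //.
have Hc : h (a :: w) = map (addb a) tt0 ++ h w by rewrite /h /= h_letterE.
rewrite Hc size_cat size_map IH /=; lia.
Qed.

Lemma nth_h w m r : m < size w -> r < 19 ->
  nth false (h w) (19 * m + r) = addb (nth false w m) (tb r).
Proof.
elim: w m => [|a w IH] m //= Hm Hr.
have Hc : h (a :: w) = map (addb a) tt0 ++ h w by rewrite /h /= h_letterE.
have St : size tt0 = 19 by [].
rewrite Hc nth_cat size_map St.
case: m Hm => [|m] Hm.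
  by rewrite muln0 add0n Hr (nth_map false) ?St.
have -> : (19 * m.+1 + r < 19) = false by lia.
have -> : 19 * m.+1 + r - 19 = 19 * m + r by lia.
by rewrite IH.
Qed.

Lemma size_hpow n : size (hpow n) = 19 ^ n.
Proof. elim: n => [|n IH]; first by []. have -> : hpow n.+1 = h (hpow n) by []. by rewrite size_h IH expnS. Qed.

Section X.
Variable x : nat -> bool.
Hypothesis Hx : is_h_omega0 x.

Lemma xE m r : r < 19 -> x (19 * m + r) = addb (x m) (tb r).
Proof.
move=> Hr.
have Hm : m < 19 ^ m by apply: ltn_expl.
rewrite (Hx m.+1); last by rewrite size_hpow expnS; nia.
have -> : hpow m.+1 = h (hpow m) by [].
rewrite nth_h ?size_hpow //.
by rewrite (Hx m) // size_hpow.
Qed.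

Definition F (bs : seq bool) (j : nat) : bool :=
  addb (nth false bs (j %/ 19)) (tb (j %% 19)).

Lemma window n i k : i %% 19 + k < 19 * n ->
  x (i + k) = F (mkseq (fun d => x (i %/ 19 + d)) n) (i %% 19 + k).
Proof.
move=> H.
rewrite /F nth_mkseq; last by rewrite ltn_divLR //; lia.
have -> : i + k = 19 * (i %/ 19 + (i %% 19 + k) %/ 19) + (i %% 19 + k) %% 19.
  rewrite {1}(divn_eq i 19) {1}(divn_eq (i %% 19 + k) 19); lia.
by rewrite xE // ltn_mod.
Qed.
End X.

Definition bools := [:: false; true].
Definition blocks2 : seq (seq bool) :=
  [:: [:: false; false]; [:: false; true]; [:: true; false]; [:: true; true]].
Definition blocks4 : seq (seq bool) :=
  [:: [:: false; false; false; false]; [:: false; false; false; true]; [:: false; false; true; false]; [:: false; false; true; true]; [:: false; true; false; false]; [:: false; true; false; true]; [:: false; true; true; false]; [:: false; true; true; true]; [:: true; false; false; false]; [:: true; false; false; true]; [:: true; false; true; false]; [:: true; false; true; true]; [:: true; true; false; false]; [:: true; true; false; true]; [:: true; true; true; false]; [:: true; true; true; true]].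

Lemma in_blocks2 f : mkseq f 2 \in blocks2.
Proof. rewrite /mkseq /=; by case: (f 0); case: (f 1). Qed.
Lemma in_blocks4 f : mkseq f 4 \in blocks4.
Proof. rewrite /mkseq /=; by case: (f 0); case: (f 1); case: (f 2); case: (f 3). Qed.

Definition sync_ok : bool :=
  all (fun bs => all (fun bs' => all (fun r => all (fun r' =>
    (r == r') || ~~ all (fun k => F bs (r + k) == F bs' (r' + k)) (iota 0 13))
    (iota 0 19)) (iota 0 19)) blocks2) blocks2.

Lemma sync_okT : sync_ok.
Proof. by vm_compute. Qed.

Definition L0 p := (7 * p) %/ 3 + 1.

Definition small_ok : bool :=
  all (fun p => all (fun bs => all (fun r =>
    ~~ all (fun k => F bs (r + k) == F bs (r + k + p)) (iota 0 (L0 p - p)))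
    (iota 0 19)) blocks4) (iota 1 18).

Lemma small_okT : small_ok.
Proof. by vm_compute. Qed.

Section Main.
Variable x : nat -> bool.
Hypothesis Hx : is_h_omega0 x.

Lemma window' n m r k : r < 19 -> r + k < 19 * n ->
  x (19 * m + r + k) = F (mkseq (fun d => x (m + d)) n) (r + k).
Proof.
move=> Hr H.
have E1 : (19 * m + r) %/ 19 = m by rewrite mulnC divnMDl // divn_small // addn0.
have E2 : (19 * m + r) %% 19 = r by rewrite mulnC modnMDl modn_small.
by rewrite (@window x Hx n) ?E1 ?E2.
Qed.

Lemma decomp i : exists m r, i = 19 * m + r /\ r < 19.
Proof. exists (i %/ 19), (i %% 19); rewrite ltn_mod; split => //. rewrite {1}(divn_eq i 19); lia. Qed.

Lemma main p : 0 < p -> forall i L, 7 * p < 3 * L ->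
  (forall k, k + p < L -> x (i + k) = x (i + k + p)) -> False.
Proof.
elim/ltn_ind: p => p IH Hp i L HL Hper.
have [m [r [Hi Hr]]] := decomp i; subst i.
have [Hsmall|Hbig] := ltnP p 19.
  move: small_okT => /allP /(_ p); rewrite mem_iota.
  move=> /(_ ltac:(lia)) /allP /(_ _ (in_blocks4 (fun d => x (m + d)))).
  move=> /allP /(_ r); rewrite mem_iota /= => /(_ Hr).
  case/negP; apply/allP => k; rewrite mem_iota /L0 add0n => Hk.
  have l0 := leq_trunc_div (7 * p) 3.
  have l1 := ltn_ceil (7 * p) (isT : 0 < 3).
  move: Hk l0 l1; set l := (7 * p) %/ 3 => Hk l0 l1.
  rewrite -(@window' 4); [|lia|lia].
  rewrite -[r + k + p]addnA -(@window' 4); [|lia|lia].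
  apply/eqP; rewrite addnA; apply: Hper; lia.
case: (boolP (19 %| p)) => Hd.
  case/dvdnP: Hd => q Hq; subst p.
  have HLq : q * 19 < L by lia.
  have [m1 [r1 [Hm1 Hr1]]] := decomp (19 * m + r + L - q * 19 - 1).
  apply: (IH q _ _ m (q + (m1 - m + 1))); [lia|lia|lia|].
  move=> k Hk.
  pose s := if k == 0 then r else 0.
  have Hs : s < 19 by rewrite /s; case: eqP.
  have Hj1 : 19 * m + r <= 19 * (m + k) + s by rewrite /s; case: eqP; lia.
  have Hj2 : 19 * (m + k) + s + q * 19 < 19 * m + r + L.
    rewrite /s; case: eqP => H; lia.
  have := Hper (19 * (m + k) + s - (19 * m + r)) ltac:(lia).
  have -> : 19 * m + r + (19 * (m + k) + s - (19 * m + r)) = 19 * (m + k) + s by lia.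
  have -> : 19 * (m + k) + s + q * 19 = 19 * (m + k + q) + s by lia.
  by rewrite !(@xE x Hx) // => /addIb.
have [HL2|HL2] := ltnP L (p + 13); first lia.
have [m' [r' [Hi' Hr']]] := decomp (19 * m + r + p).
move: sync_okT => /allP /(_ _ (in_blocks2 (fun d => x (m + d)))); cbv beta.
move=> /allP /(_ _ (in_blocks2 (fun d => x (m' + d)))); cbv beta.
move=> /allP /(_ r); rewrite mem_iota add0n => /(_ Hr); cbv beta.
move=> /allP /(_ r'); rewrite mem_iota add0n => /(_ Hr'); cbv beta.
case/orP.
  move/eqP => Heq; case/negP: Hd.
  apply/dvdnP; exists (m' - m); lia.
case/negP; apply/allP => k; rewrite mem_iota add0n => Hk.
rewrite -(@window' 2); [|lia|lia].
rewrite -(@window' 2); [|lia|lia].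
apply/eqP; rewrite (Hper k); last lia.
f_equal; lia.
Qed.
End Main.

Lemma flatten_nth (y y' : seq bool) n k : y' = take (size y') y ->
  k < n * size y + size y' ->
  nth false (flatten (nseq n y) ++ y') k = nth false y (k %% size y).
Proof.
move=> Hpre.
have Hsz : size y' <= size y by rewrite Hpre size_take; case: ltnP => //; lia.
elim: n k => [|n IH] k Hk.
  rewrite mul0n add0n in Hk.
  have Hk' : k < size y by lia.
  rewrite modn_small // /= Hpre nth_take //.
have -> : flatten (nseq n.+1 y) ++ y' = y ++ (flatten (nseq n y) ++ y') by rewrite /= catA.
rewrite nth_cat.
case: ifP => H.
  by rewrite modn_small.
have Hk' : k - size y < n * size y + size y' by lia.
rewrite IH //.
have -> : k = (k - size y) + size y by lia.
by rewrite modnDr addnK.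
Qed.

Theorem theorem13 :
  forall x : nat -> bool, is_h_omega0 x -> avoids_plus x (7%:R / 3%:R)%R.
Proof.
move=> x Hx eps Heps i L beta Hbeta [y [y' [n [Hy Hpre Hu Hb]]]].
set p := size y.
have Hp : 0 < p by rewrite /p lt0n size_eq0.
have HL : L = n * p + size y'.
  have := congr1 size Hu; rewrite size_mkseq size_cat size_flatten.
  move=> ->; congr (_ + _).
  rewrite /shape map_nseq sumn_nseq /p; lia.
have Hper : forall k, k < L -> x (i + k) = nth false y (k %% p).
  move=> k Hk.
  have := congr1 (fun s => nth false s k) Hu => /=.
  rewrite nth_mkseq // => ->; apply: flatten_nth.
    by move: Hpre; rewrite prefixE => /eqP.
  rewrite /p in HL; lia.
apply: (@main x Hx p Hp i L).
  have Hlt : (7%:R / 3%:R < beta :> rat)%R.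
    apply: (lt_le_trans _ Hbeta); rewrite ltrDl //.
  have E : (beta * p%:R = L%:R :> rat)%R.
    rewrite Hb HL natrD natrM mulrDl mulfVK //.
    by rewrite pnatr_eq0 -lt0n.
  have Hp' : (0 < p%:R :> rat)%R by rewrite ltr0n.
  have Hq : ((7 * p)%:R < (3 * L)%:R :> rat)%R.
    rewrite !natrM -E; nra.
  by rewrite ltr_nat in Hq.
move=> k Hk.
rewrite -addnA Hper; last lia.
rewrite Hper; last lia.
by rewrite modnDr.
Qed.
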